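(* Let $L>0$ and $\sigma>0$, and let $X_1,\dots,X_n$ be i.i.d. real random variables from a symmetric distribution with $\mathbb{P}(|X_i|>\sigma)=1/2$ (e.g. uniform on $(-2\sigma,2\sigma)$). Then there is a symmetric function $K:\mathbb{R}\times\mathbb{R}\to\mathbb{R}$ satisfying $|K(x_1,x_2)-K(y_1,y_2)|\le L(|x_1-y_1|+|x_2-y_2|)$ for all $x_1,x_2,y_1,y_2$ such that, when $n\ge 8$, the kernel matrix $K=(K(X_i,X_j))_{i,j=1}^n$ satisfies $$\mathbb{P}\big(\|K-\mathbb{E}K\|>L\sigma n/8\big)\ge 1-e^{-n/8}.$$
   Context: $\|\cdot\|$ denotes the spectral norm of an $n\times n$ matrix. *)

(* Defs.v *)
From HB Require Import structures.
From mathcomp Require Import all_boot all_order all_algebra.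
From mathcomp Require Import all_classical all_reals all_analysis.
Set Implicit Arguments. Unset Strict Implicit. Unset Printing Implicit Defensive.
Import Order.TTheory GRing.Theory Num.Theory.
Local Open Scope classical_set_scope.
Local Open Scope ring_scope.

Definition l2norm (R : realType) (n : nat) (v : 'cV[R]_n) : R :=
  Num.sqrt (\sum_(i < n) v i ord0 ^+ 2).

Definition specnorm (R : realType) (n : nat) (M : 'M[R]_n) : R :=
  sup [set l2norm (M *m v) | v in [set v : 'cV[R]_n | l2norm v <= 1]].

Definition mutually_independent (R : realType) (d : measure_display)
  (T : measurableType d) (P : probability T R) (n : nat)
  (X : 'I_n -> T -> R) : Prop :=
  forall B : 'I_n -> set R, (forall i, measurable (B i)) ->
    P (\bigcap_(i in [set: 'I_n]) (X i @^-1` B i)) =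
    (\prod_(i < n) P (X i @^-1` B i))%E.

Definition identically_distributed (R : realType) (d : measure_display)
  (T : measurableType d) (P : probability T R) (n : nat)
  (X : 'I_n -> T -> R) : Prop :=
  forall i j (B : set R), measurable B -> P (X i @^-1` B) = P (X j @^-1` B).

Definition symmetric_distribution (R : realType) (d : measure_display)
  (T : measurableType d) (P : probability T R) (Y : T -> R) : Prop :=
  forall B : set R, measurable B ->
    P (Y @^-1` B) = P ((fun w => - Y w) @^-1` B).

Definition expected_kernel_matrix (R : realType) (d : measure_display)
  (T : measurableType d) (P : probability T R) (n : nat)
  (X : 'I_n -> T -> R) (K : R -> R -> R) : 'M[R]_n :=
  \matrix_(i, j) fine (\int[P]_w (K (X i w) (X j w))%:E).

Definition kernel_matrix (R : realType) (T : Type) (n : nat)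
  (X : 'I_n -> T -> R) (K : R -> R -> R) (w : T) : 'M[R]_n :=
  \matrix_(i, j) K (X i w) (X j w).

(* Main.v *)
Require Import Defs.
From HB Require Import structures.
From mathcomp Require Import all_boot all_order all_algebra.
From mathcomp Require Import all_classical all_reals all_analysis.
From mathcomp Require Import ring lra measurable_realfun.
Import Order.TTheory GRing.Theory Num.Theory.
Set Implicit Arguments. Unset Strict Implicit. Unset Printing Implicit Defensive.
Local Open Scope classical_set_scope.
Local Open Scope ring_scope.
Definition hc {R : realType} (s x : R) : R := (`|x + s| - `|x - s|) / 2.

Lemma hc_lip (R : realType) (s x y : R) : `|hc s x - hc s y| <= `|x - y|.
Proof.
have h1 := ler_dist_dist (x + s) (y + s).
have h2 := ler_dist_dist (x - s) (y - s).
have e1 : x + s - (y + s) = x - y by ring.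
have e2 : x - s - (y - s) = x - y by ring.
rewrite e1 in h1; rewrite e2 in h2.
move: h1 h2; rewrite /hc !ler_norml => /andP[h1 h1'] /andP[h2 h2'].
apply/andP; split; lra.
Qed.

Lemma hc_bound (R : realType) (s x : R) : 0 <= s -> `|hc s x| <= s.
Proof.
move=> s0; have h := ler_dist_dist (x + s) (x - s).
have e : x + s - (x - s) = s * 2 by ring.
rewrite e in h; move: h; rewrite normrM (ger0_norm s0) ger0_norm // /hc !ler_norml => /andP[h1 h2].
apply/andP; split; lra.
Qed.

Lemma hc_big (R : realType) (s x : R) : 0 <= s -> s < `|x| -> hc s x ^+ 2 = s ^+ 2.
Proof.
move=> s0; rewrite /hc; case: (lerP 0 x) => x0.
  rewrite (ger0_norm x0) => sx.
  rewrite (ger0_norm (x := x + s)); last lra.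
  rewrite (ger0_norm (x := x - s)); last lra.
  have -> : (x + s - (x - s)) / 2 = s by field.
  done.
rewrite (ltr0_norm x0) => sx.
rewrite (ler0_norm (x := x + s)); last lra.
rewrite (ler0_norm (x := x - s)); last lra.
have -> : (- (x + s) - - (x - s)) / 2 = - s by field.
by rewrite sqrrN.
Qed.

Lemma hc_odd (R : realType) (s x : R) : hc s (- x) = - hc s x.
Proof.
rewrite /hc -(normrN (- x + s)) -(normrN (- x - s)).
have -> : - (- x + s) = x - s by ring.
have -> : - (- x - s) = x + s by ring.
by rewrite -mulNr opprB.
Qed.

Lemma hc_meas (R : realType) (s : R) : measurable_fun setT (hc s).
Proof.
rewrite /hc.
apply: measurable_funM; last exact: measurable_cst.
apply: measurable_funB.
  apply: measurableT_comp; first exact: normr_measurable.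
  by apply: measurable_funD => //; exact: measurable_cst.
apply: measurableT_comp; first exact: normr_measurable.
by apply: measurable_funB => //; exact: measurable_cst.
Qed.

Definition mkRV d (T : measurableType d) (R : realType) (f : T -> R)
  (mf : measurable_fun setT f) : {mfun T >-> R} :=
  MeasurableFun.Pack (MeasurableFun.Class (isMeasurableFun.Build _ _ _ _ _ mf)).
Arguments mkRV {d T R f}.

Lemma mkRVE d (T : measurableType d) (R : realType) (f : T -> R)
  (mf : measurable_fun setT f) : (mkRV mf : T -> R) = f.
Proof. by []. Qed.

Lemma integrable_bdd (R : realType) d (T : measurableType d) (P : probability T R)
  (f : T -> R) (M : R) : measurable_fun setT f -> (forall w, `|f w| <= M) ->
  P.-integrable setT (EFin \o f).
Proof.
move=> mf fM; apply: measurable_bounded_integrable => //.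
  first [ by rewrite (probability_setT P) ltry | by apply: (le_lt_trans (probability_le1 P measurableT)); exact: ltry ].
exists M; split; first exact: num_real.
by move=> x Mx w _; apply: le_trans (fM w) (ltW Mx).
Qed.

Lemma sym_int0 (R : realType) d (T : measurableType d) (P : probability T R)
  (Y : T -> R) (g : R -> R) (M : R) :
  measurable_fun setT Y -> symmetric_distribution P Y ->
  measurable_fun setT g -> (forall x, g (- x) = - g x) ->
  (forall x, `|g x| <= M) ->
  (\int[P]_w (g (Y w))%:E = 0)%E.
Proof.
move=> mY sY mg godd gM.
have mNY : measurable_fun setT (fun w => - Y w).
  exact: measurableT_comp.
have mgE : measurable_fun [set: R] (fun x : R => (g x)%:E) by exact/measurable_EFinP.
have iY : P.-integrable setT (fun w => (g (Y w))%:E).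
  apply: (@integrable_bdd _ _ _ P (g \o Y) M); [exact: measurableT_comp | by move=> w; exact: gM].
have iNY : P.-integrable setT (fun w => (g (- Y w))%:E).
  apply: (@integrable_bdd _ _ _ P (g \o (fun w => - Y w)) M); [exact: measurableT_comp | by move=> w; exact: gM].
have e1 : (\int[P]_w (g (Y w))%:E = \int[distribution P (mkRV mY)]_y (EFin \o g) y)%E.
  by rewrite integral_distribution.
have e2 : (\int[distribution P (mkRV mY)]_y (EFin \o g) y =
          \int[distribution P (mkRV mNY)]_y (EFin \o g) y)%E.
  apply: eq_measure_integral => A mA _.
  exact: (sY A mA).
have e3 : (\int[distribution P (mkRV mNY)]_y (EFin \o g) y =
          \int[P]_w (- (g (Y w))%:E))%E.
  rewrite integral_distribution //; apply: eq_integral => w _ /=.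
  by rewrite godd.
have e4 : (\int[P]_w (- (g (Y w))%:E) = - \int[P]_w (g (Y w))%:E)%E.
  have -> : (\int[P]_w (- (g (Y w))%:E) = \int[P]_w ((-1)%:E * (g (Y w))%:E))%E.
    by apply: eq_integral => w _; rewrite mulN1e.
  by rewrite integralZl // mulN1e.
have fin : (\int[P]_w (g (Y w))%:E)%E \is a fin_num.
  exact: integrable_fin_num iY.
move: e1 e2 e3 e4 fin; set I := (\int[P]_w (g (Y w))%:E)%E.
move=> -> -> -> .
case: (\int[P]_w _)%E => // r.
move=> H _; apply/eqP; rewrite eqe; move: H => /eqP; rewrite eqe => /eqP H.
apply/eqP; lra.
Qed.
Lemma sumsq_ge0 (R : realType) n (v : 'cV[R]_n) : 0 <= \sum_i v i ord0 ^+ 2.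
Proof. by apply: sumr_ge0 => i _; exact: sqr_ge0. Qed.

Lemma l2norm_sq (R : realType) n (v : 'cV[R]_n) :
  l2norm v ^+ 2 = \sum_i v i ord0 ^+ 2.
Proof. by rewrite /l2norm sqr_sqrtr // sumsq_ge0. Qed.

Lemma coord_le1 (R : realType) n (v : 'cV[R]_n) j :
  l2norm v <= 1 -> `|v j ord0| <= 1.
Proof.
move=> h.
have q0 : 0 <= l2norm v by exact: sqrtr_ge0.
have e := l2norm_sq v.
have hj : v j ord0 ^+ 2 <= \sum_i v i ord0 ^+ 2.
  rewrite (bigD1 j) //= lerDl; apply: sumr_ge0 => i _; exact: sqr_ge0.
have nk : `|v j ord0| ^+ 2 = v j ord0 ^+ 2 by rewrite real_normK // num_real.
have n0 := normr_ge0 (v j ord0).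
nra.
Qed.

Lemma Mv_le (R : realType) n (M : 'M[R]_n) (v : 'cV[R]_n) : l2norm v <= 1 ->
  l2norm (M *m v) <= Num.sqrt (\sum_i (\sum_j `|M i j|) ^+ 2).
Proof.
move=> hv; rewrite /l2norm ler_sqrt; last first.
  by apply: sumr_ge0 => i _; exact: sqr_ge0.
apply: ler_sum => i _; rewrite mxE.
have h1 : `|\sum_j M i j * v j ord0| <= \sum_j `|M i j|.
  apply: le_trans (ler_norm_sum _ _ _) _.
  apply: ler_sum => j _; rewrite normrM.
  have := coord_le1 j hv; have := normr_ge0 (M i j); have := normr_ge0 (v j ord0).
  nra.
have nk : `|\sum_j M i j * v j ord0| ^+ 2 = (\sum_j M i j * v j ord0) ^+ 2.
  by rewrite real_normK // num_real.
have n0 := normr_ge0 (\sum_j M i j * v j ord0).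
nra.
Qed.

Lemma specnorm_ge (R : realType) n (M : 'M[R]_n) (v : 'cV[R]_n) :
  l2norm v <= 1 -> l2norm (M *m v) <= specnorm M.
Proof.
move=> hv; rewrite /specnorm; apply: ub_le_sup.
  exists (Num.sqrt (\sum_i (\sum_j `|M i j|) ^+ 2)).
  by move=> _ [u hu <-]; exact: Mv_le.
by exists v.
Qed.

Lemma rank2_lb (R : realType) n (L : R) (a : 'I_n -> R) (M : 'M[R]_n) :
  (0 < n)%N -> (forall i j, M i j = L * (a i + a j)) ->
  L ^+ 2 * n%:R * \sum_i a i ^+ 2 <= specnorm M ^+ 2.
Proof.
move=> n0 HM.
have nR : 0 < n%:R :> R by rewrite ltr0n.
set r := (Num.sqrt (n%:R : R))^-1.
have r2 : r ^+ 2 * n%:R = 1.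
  rewrite /r exprVn sqr_sqrtr; last exact: ltW.
  have nz : (n%:R : R) != 0 by rewrite gt_eqF.
  by field.
pose v0 : 'cV[R]_n := const_mx r.
have hv : l2norm v0 <= 1.
  rewrite /l2norm.
  under eq_bigr => i _ do rewrite mxE.
  by rewrite sumr_const card_ord -mulr_natr r2 sqrtr1.
have sn := specnorm_ge M hv.
have l0 : 0 <= l2norm (M *m v0) by exact: sqrtr_ge0.
suff : L ^+ 2 * n%:R * \sum_i a i ^+ 2 <= l2norm (M *m v0) ^+ 2 by nra.
rewrite l2norm_sq.
set s := \sum_(j < n) a j.
have Mi : forall i, (M *m v0) i ord0 = L * r * (n%:R * a i + s).
  move=> i; rewrite mxE.
  transitivity (L * r * \sum_(j < n) (a i + a j)).
    rewrite mulr_sumr; apply: eq_bigr => j _; rewrite mxE HM; ring.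
  by rewrite big_split /= sumr_const card_ord -/s mulr_natl.
have -> : \sum_i (M *m v0) i ord0 ^+ 2 = \sum_(i < n) (L * r * (n%:R * a i + s)) ^+ 2.
  by apply: eq_bigr => i _; rewrite Mi.
have E : \sum_(i < n) (L * r * (n%:R * a i + s)) ^+ 2 =
   (L * r) ^+ 2 * (n%:R ^+ 2 * \sum_i a i ^+ 2 + 3 * n%:R * s ^+ 2).
  transitivity (\sum_(i < n) ((L * r) ^+ 2 * (n%:R ^+ 2) * a i ^+ 2 +
      ((L * r) ^+ 2 * 2 * n%:R * s) * a i + (L * r) ^+ 2 * s ^+ 2)).
    by apply: eq_bigr => i _; ring.
  rewrite !big_split /= -!mulr_sumr sumr_const card_ord -/s -mulr_natr.
  ring.
rewrite E.
have s2 : 0 <= s ^+ 2 := sqr_ge0 s.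
have A0 : 0 <= \sum_i a i ^+ 2 by apply: sumr_ge0 => i _; exact: sqr_ge0.
have eq1 : (L * r) ^+ 2 * (n%:R ^+ 2 * \sum_i a i ^+ 2) = L ^+ 2 * n%:R * \sum_i a i ^+ 2.
  transitivity (L ^+ 2 * (r ^+ 2 * n%:R) * n%:R * \sum_i a i ^+ 2); first ring.
  by rewrite r2 mulr1.
rewrite mulrDr eq1 lerDl.
apply: mulr_ge0; first exact: sqr_ge0.
by apply: mulr_ge0 => //; apply: mulr_ge0 => //; exact: ltW.
Qed.
Definition cnt n (e : {ffun 'I_n -> bool}) : nat := \sum_(i < n) (e i : nat).

Lemma comb_bound (R : realType) n :
  \sum_(e : {ffun 'I_n -> bool}) (if (64 * cnt e <= n)%N then (2^-1 : R) ^+ n else 0)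
    <= expR (- (n%:R / 8)).
Proof.
set q : R := 3 / 5.
have q0 : 0 < q by rewrite /q; lra.
have q1 : q <= 1 by rewrite /q; lra.
have qn0 : 0 < q ^+ n by exact: exprn_gt0.
have h2 : 0 < (2^-1 : R) ^+ n by apply: exprn_gt0; lra.
apply: (@le_trans _ _ (\sum_(e : {ffun 'I_n -> bool})
    ((2^-1 : R) ^+ n * (q ^+ n)^-1 * (q ^+ 64) ^+ cnt e))).
  apply: ler_sum => e _; case: ifP => bad.
    have hq : q ^+ n <= (q ^+ 64) ^+ cnt e.
      by rewrite -exprM; apply: ler_wiXn2l => //; exact: ltW.
    have : 1 <= (q ^+ n)^-1 * (q ^+ 64) ^+ cnt e.
      by rewrite ler_pdivlMl // mulr1.
    move=> H; rewrite -mulrA; rewrite -[X in X <= _]mulr1.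
    by apply: ler_wpM2l => //; exact: ltW.
  apply: mulr_ge0; last by apply: exprn_ge0; apply: exprn_ge0; exact: ltW.
  by apply: mulr_ge0; [exact: ltW | rewrite invr_ge0; exact: ltW].
rewrite -mulr_sumr.
have S : \sum_(e : {ffun 'I_n -> bool}) (q ^+ 64) ^+ cnt e = (q ^+ 64 + 1) ^+ n.
  transitivity (\sum_(e : {ffun 'I_n -> bool}) \prod_(i < n) (q ^+ 64) ^+ (e i : nat)).
    by apply: eq_bigr => e _; rewrite prodrXr.
  rewrite -(bigA_distr_bigA (fun (i : 'I_n) (b : bool) => (q ^+ 64) ^+ (b : nat))) /=.
  under eq_bigr => i _ do rewrite big_bool /= expr1 expr0.
  by rewrite prodr_const card_ord.
rewrite S.
set x : R := 2^-1 * q^-1 * (q ^+ 64 + 1).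
have ex : (2^-1 : R) ^+ n * (q ^+ n)^-1 * (q ^+ 64 + 1) ^+ n = x ^+ n.
  by rewrite -exprVn -!exprMn.
rewrite ex.
have q64 : q ^+ 64 <= q ^+ 6 by apply: ler_wiXn2l => //; exact: ltW.
have q6 : q ^+ 6 = 729 / 15625 by rewrite /q; field.
have x0 : 0 <= x.
  rewrite /x; apply: mulr_ge0; last by apply: addr_ge0 => //; apply: exprn_ge0; exact: ltW.
  by apply: mulr_ge0; [lra | rewrite invr_ge0; exact: ltW].
have x78 : x <= 7 / 8.
  rewrite /x /q in q64 q6 *.
  have e5 : (3 / 5 : R)^-1 = 5 / 3 by field.
  rewrite e5; have := exprn_ge0 64 (ltW q0); rewrite /q => ?; lra.
have eE : expR (- (n%:R / 8)) = expR (- (1 / 8) : R) ^+ n.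
  by rewrite -expRM_natl; congr expR; field.
rewrite eE; apply: lerXn2r; rewrite ?nnegrE //.
apply: le_trans x78 _.
have := expR_ge1Dx (- (1 / 8) : R); lra.
Qed.

Lemma prob_part (R : realType) d (T : measurableType d) (P : probability T R) n
  (X : 'I_n -> T -> R) (sigma : R) :
  (forall i, measurable_fun setT (X i)) -> mutually_independent P X ->
  (forall i, P [set w | sigma < `|X i w|] = (2^-1)%:E) ->
  measurable [set w | (64 * cnt [ffun i => (sigma < `|X i w|)%R] <= n)%N] /\
  (P [set w | (64 * cnt [ffun i => (sigma < `|X i w|)%R] <= n)%N]
     <= (expR (- (n%:R / 8)))%:E)%E.
Proof.
move=> mX ind half.
pose pat (w : T) : {ffun 'I_n -> bool} := [ffun i : 'I_n => (sigma < `|X i w|)%R].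
pose B (b : bool) : set R := [set x | (sigma < `|x|) = b].
have mBt : measurable (B true).
  have -> : B true = (@Num.norm _ R) @^-1` `]sigma, +oo[%classic.
    by apply/seteqP; split => x /=; rewrite in_itv /= andbT.
  rewrite -[X in measurable X]setTI.
  exact: (normr_measurable measurableT (measurable_itv _)).
have BF : B false = ~` B true.
  by apply/seteqP; split => x; rewrite /B /=; case: (sigma < `|x|).
have mB : forall b, measurable (B b).
  by case => //; rewrite BF; exact: measurableC.
have mXB : forall i b, measurable (X i @^-1` B b).
  move=> i b; rewrite -[X in measurable X]setTI.
  exact: (mX i measurableT (B b) (mB b)).
have PB : forall i b, P (X i @^-1` B b) = (2^-1)%:E.
  move=> i [] ; first exact: half i.
  rewrite BF -preimage_setC probability_setC; last exact: mXB i true.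
  have -> : P (X i @^-1` B true) = (2^-1)%:E by exact: half i.
  rewrite -EFinB; congr EFin; lra.
pose E e := [set w | pat w = e].
have EE : forall e, E e = \bigcap_(i in [set: 'I_n]) (X i @^-1` B (e i)).
  move=> e; apply/seteqP; split => w /=.
    by move=> <- i _; rewrite /B /= ffunE.
  by move=> H; apply/ffunP => i; rewrite ffunE; exact: (H i Logic.I).
have mE : forall e, measurable (E e).
  move=> e; rewrite EE; apply: fin_bigcap_measurable; first exact: finite_finset.
  by move=> i _; exact: mXB.
have PE : forall e, P (E e) = ((2^-1)^+n)%:E.
  move=> e; rewrite EE ind; last by move=> i; exact: mB.
  under eq_bigr => i _ do rewrite PB.
  by rewrite prodEFin prodr_const card_ord.
pose bad (e : {ffun 'I_n -> bool}) := (64 * cnt e <= n)%N.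
pose F (e : {ffun 'I_n -> bool}) : set T := if bad e then E e else set0.
have UE : [set w | (64 * cnt [ffun i => (sigma < `|X i w|)%R] <= n)%N] =
          \bigcup_(e in [set: {ffun 'I_n -> bool}]) F e.
  apply/seteqP; split => w /=.
    by move=> bw; exists (pat w) => //; rewrite /F /bad bw /E.
  move=> [e _]; rewrite /F; case: ifP => [be /= pe | _ []].
  by rewrite -pe in be.
have mF : forall e, measurable (F e).
  by move=> e; rewrite /F; case: ifP => _ //; exact: mE.
have tF : trivIset setT F.
  move=> e1 e2 _ _ [w [h1 h2]]; move: h1 h2; rewrite /F.
  case: ifP => _; last by [].
  case: ifP => _; last by [].
  by rewrite /E /= => <- <-.
split.
  rewrite UE; apply: fin_bigcup_measurable; first exact: finite_finset.
  by move=> e _; exact: mF.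
rewrite UE (measure_fin_bigcup P finite_finset tF (fun e _ => mF e)).
rewrite (fsbigE (index_enum _)) //; last first.
  - by move=> e _; rewrite mem_index_enum.
  - exact: index_enum_uniq.
under eq_bigl => e do rewrite in_setT.
have PF : forall e, P (F e) = (if bad e then (2^-1 : R) ^+ n else 0)%:E.
  by move=> e; rewrite /F; case: ifP => _; [exact: PE | exact: measure0].
rewrite (eq_bigr (fun e => (if bad e then (2^-1 : R) ^+ n else 0)%:E)); last by move=> e _; exact: PF.
rewrite sumEFin lee_fin.
exact: comb_bound.
Qed.


Unset Implicit Arguments.

Theorem proposition1 (R : realType) (L sigma : R) (n : nat)
  (d : measure_display) (T : measurableType d) (P : probability T R)
  (X : 'I_n -> T -> R) :
  0 < L -> 0 < sigma ->
  (forall i, measurable_fun setT (X i)) ->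
  mutually_independent P X ->
  identically_distributed P X ->
  (forall i, symmetric_distribution P (X i)) ->
  (forall i, P [set w | sigma < `|X i w|] = (2^-1)%:E) ->
  exists K : R -> R -> R,
    (forall x y, K x y = K y x) /\
    (forall x1 x2 y1 y2,
       `|K x1 x2 - K y1 y2| <= L * (`|x1 - y1| + `|x2 - y2|)) /\
    ((8 <= n)%N ->
       (forall i j, P.-integrable setT (fun w => (K (X i w) (X j w))%:E)) /\
       exists A : set T, measurable A /\
         A `<=` [set w | L * sigma * n%:R / 8 <
            specnorm (kernel_matrix X K w - expected_kernel_matrix P X K)] /\
         ((1 - expR (- (n%:R / 8)))%:E <= P A)%E).
Proof.
move=> L0 s0 mX ind idd sym half.
exists (fun x y => L * (hc sigma x + hc sigma y)).
split; first by move=> x y; rewrite addrC.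
split.
  move=> x1 x2 y1 y2.
  have h1 := hc_lip sigma x1 y1; have h2 := hc_lip sigma x2 y2.
  rewrite -mulrBr normrM (gtr0_norm L0); apply: ler_wpM2l; first exact: ltW.
  have -> : hc sigma x1 + hc sigma x2 - (hc sigma y1 + hc sigma y2) =
            (hc sigma x1 - hc sigma y1) + (hc sigma x2 - hc sigma y2) by ring.
  apply: le_trans (ler_normD _ _) _; exact: lerD.
move=> n8.
have n0 : (0 < n)%N by apply: leq_trans n8.
have mh := hc_meas sigma.
have hb : forall x, `|hc sigma x| <= sigma := fun x => hc_bound x (ltW s0).
have int0 : forall i, (\int[P]_w (hc sigma (X i w))%:E = 0)%E.
  move=> i; exact: (sym_int0 (M := sigma) (mX i) (sym i) mh (hc_odd sigma) hb).
have mhX : forall i, measurable_fun setT (fun w => hc sigma (X i w)).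
  by move=> i; exact: measurableT_comp.
have intL : forall i, P.-integrable setT (fun w => (L * hc sigma (X i w))%:E).
  move=> i; apply: (@integrable_bdd _ _ _ P _ (L * sigma)).
    by apply: measurable_funM => //; exact: measurable_cst.
  move=> w; rewrite normrM gtr0_norm //; apply: ler_wpM2l => //; exact: ltW.
have intK : forall i j, P.-integrable setT
    (fun w => (L * (hc sigma (X i w) + hc sigma (X j w)))%:E).
  move=> i j; apply: (@integrable_bdd _ _ _ P _ (L * (sigma + sigma))).
    apply: measurable_funM; first exact: measurable_cst.
    exact: measurable_funD.
  move=> w; rewrite normrM gtr0_norm //; apply: ler_wpM2l; first exact: ltW.
  apply: le_trans (ler_normD _ _) _; exact: lerD.
split; first exact: intK.
have intLi : forall i, (\int[P]_w (L * hc sigma (X i w))%:E = 0)%E.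
  move=> i.
  transitivity (\int[P]_w (L%:E * (hc sigma (X i w))%:E))%E.
    by apply: eq_integral => w _; rewrite EFinM.
  rewrite integralZl //; last first.
    by apply: (@integrable_bdd _ _ _ P _ sigma).
  by rewrite int0 mule0.
have EK0 : expected_kernel_matrix P X (fun x y => L * (hc sigma x + hc sigma y)) = 0.
  apply/matrixP => i j; rewrite !mxE.
  transitivity (fine (\int[P]_w ((L * hc sigma (X i w))%:E + (L * hc sigma (X j w))%:E))%E).
    by congr fine; apply: eq_integral => w _; rewrite -EFinD mulrDr.
  by rewrite integralD // intLi intLi adde0.
have [mU PU] := prob_part mX ind half.
move: mU PU; set U := (Z in measurable Z -> _); move=> mU PU.
exists (~` U); split; first exact: measurableC.
split.
  move=> w /= nb.
  rewrite EK0 subr0.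
  set M := kernel_matrix _ _ w.
  have HM : forall i j, M i j = L * (hc sigma (X i w) + hc sigma (X j w)).
    by move=> i j; rewrite mxE.
  have lb := rank2_lb n0 HM.
  set e : {ffun 'I_n -> bool} := [ffun i => (sigma < `|X i w|)%R].
  have nb' : (n < 64 * cnt e)%N by rewrite ltnNge; apply/negP.
  have cR : (n%:R < 64 * (cnt e)%:R :> R).
    by rewrite -natrM ltr_nat.
  have Acnt : (cnt e)%:R * sigma ^+ 2 <= \sum_i hc sigma (X i w) ^+ 2.
    rewrite /cnt natr_sum mulr_suml; apply: ler_sum => i _.
    have ei : e i = (sigma < `|X i w|)%R by rewrite ffunE.
    rewrite ei; case: (ltrP sigma `|X i w|) => hi /=.
      by rewrite mul1r hc_big // ltW.
    by rewrite mul0r; exact: sqr_ge0.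
  have sn0 : 0 <= specnorm M.
    apply: le_trans (sqrtr_ge0 _) (specnorm_ge M (v := 0) _).
    by rewrite /l2norm big1 ?sqrtr0 // => i _; rewrite mxE expr0n.
  set S := specnorm M in lb sn0 *.
  set A := \sum_i hc sigma (X i w) ^+ 2 in lb Acnt.
  set c := (cnt e)%:R in cR Acnt.
  have nR : 0 < n%:R :> R by rewrite ltr0n.
  have L2 : 0 < L ^+ 2 * n%:R by apply: mulr_gt0 => //; exact: exprn_gt0.
  have k1 : L ^+ 2 * n%:R * (c * sigma ^+ 2) <= S ^+ 2.
    apply: le_trans lb; apply: ler_wpM2l => //; exact: ltW.
  have s2 : 0 < sigma ^+ 2 by exact: exprn_gt0.
  have k2 : (L * sigma * n%:R / 8) ^+ 2 < L ^+ 2 * n%:R * (c * sigma ^+ 2).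
    have -> : (L * sigma * n%:R / 8) ^+ 2 = L ^+ 2 * n%:R * (n%:R / 64 * sigma ^+ 2).
      by field.
    rewrite ltr_pM2l // ltr_pM2r //; lra.
  have t0 : 0 <= L * sigma * n%:R / 8.
    apply: mulr_ge0; last lra.
    by apply: mulr_ge0; [apply: mulr_ge0; apply: ltW | apply: ltW].
  rewrite ltNge; apply/negP => H.
  have : S ^+ 2 <= (L * sigma * n%:R / 8) ^+ 2.
    by apply: lerXn2r; rewrite ?nnegrE.
  lra.
rewrite probability_setC //.
have PUfin : P U = (fine (P U))%:E.
  rewrite fineK //; apply: fin_num_measure => //.
move: PU; rewrite PUfin lee_fin => PU.
by rewrite -EFinB lee_fin; lra.
Qed.
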